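(* Let $\Delta>0$, $\varepsilon_{\mathrm{opt}}<\Delta$ and $b'=b+\Delta$. Let $\bar\pi$ be a policy with $\hat V^{\bar\pi}_{r_p}(\rho)\ge\hat V^{\hat\pi^*}_{r_p}(\rho)-\varepsilon_{\mathrm{opt}}$ and $\hat V^{\bar\pi}_c(\rho)\ge b'-\varepsilon_{\mathrm{opt}}$ (e.g. the output $\bar\pi_T$ of the primal-dual algorithm under the conditions of its guarantee). Suppose $$|V^{\bar\pi}_c(\rho)-\hat V^{\bar\pi}_c(\rho)|\le\Delta-\varepsilon_{\mathrm{opt}},\qquad|V^{\pi^*}_c(\rho)-\hat V^{\pi^*}_c(\rho)|\le\Delta.$$ Then (a) $V^{\bar\pi}_c(\rho)\ge b$, and (b) $$V^{\pi^*}_r(\rho)-V^{\bar\pi}_r(\rho)\le\frac{2\omega}{1-\gamma}+\varepsilon_{\mathrm{opt}}+2\Delta\lambda^*+|V^{\pi^*}_{r_p}(\rho)-\hat V^{\pi^*}_{r_p}(\rho)|+|\hat V^{\bar\pi}_{r_p}(\rho)-V^{\bar\pi}_{r_p}(\rho)|.$$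
   Context: A discounted CMDP $M=\langle\mathcal S,\mathcal A,\mathcal P,r,c,b,\rho,\gamma\rangle$ with finite state and action sets, reward $r:\mathcal S\times\mathcal A\to[0,1]$, constraint reward $c:\mathcal S\times\mathcal A\to[0,1]$, threshold $b$, initial distribution $\rho$, discount $\gamma\in[0,1)$. $V^\pi_g(\rho)$ is the discounted value of policy $\pi$ for reward $g$ under $\mathcal P$, $s_0\sim\rho$; hats denote values under an empirical kernel $\hat{\mathcal P}$. $r_p=r+\xi$ with $\xi(s,a)\in[0,\omega]$. $\pi^*$ is an optimal policy of $\max_\pi V^\pi_r(\rho)$ s.t. $V^\pi_c(\rho)\ge b$; $\hat\pi^*$ is an optimal policy of $\max_\pi\hat V^\pi_{r_p}(\rho)$ s.t. $\hat V^\pi_c(\rho)\ge b'$, and $\lambda^*\ge0$ its optimal dual variable, i.e. a minimizer over $\lambda\ge0$ of $\max_\pi[\hat V^\pi_{r_p}(\rho)+\lambda(\hat V^\pi_c(\rho)-b')]$ (strong duality holds). *)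

(* Defs.v *)
From HB Require Import structures.
From mathcomp Require Import all_boot all_order all_algebra.
From mathcomp Require Import all_classical all_reals all_analysis.
Set Implicit Arguments. Unset Strict Implicit. Unset Printing Implicit Defensive.
Import Order.TTheory GRing.Theory Num.Theory.
Import numFieldNormedType.Exports.
Local Open Scope ring_scope.
Local Open Scope classical_set_scope.

Section CMDP.
Variables (R : realType) (S A : finType).

Definition is_distr (T : finType) (d : T -> R) : Prop :=
  (forall x, 0 <= d x) /\ \sum_(x : T) d x = 1.

Definition is_kernel (P : S -> A -> S -> R) : Prop :=
  forall s a, is_distr (P s a).

Definition is_policy (pi : S -> A -> R) : Prop :=
  forall s, is_distr (pi s).

(* state distribution at time t when s_0 ~ rho, a_t ~ pi(.|s_t), s_{t+1} ~ P(.|s_t,a_t) *)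
Fixpoint state_dist (P : S -> A -> S -> R) (pi : S -> A -> R) (rho : S -> R)
  (t : nat) : S -> R :=
  match t with
  | 0 => rho
  | t'.+1 => fun s' => \sum_(s : S) \sum_(a : A)
              state_dist P pi rho t' s * pi s a * P s a s'
  end.

Definition exp_reward (P : S -> A -> S -> R) (pi : S -> A -> R)
  (g : S -> A -> R) (rho : S -> R) (t : nat) : R :=
  \sum_(s : S) \sum_(a : A) state_dist P pi rho t s * pi s a * g s a.

Definition value (P : S -> A -> S -> R) (gamma : R) (pi : S -> A -> R)
  (g : S -> A -> R) (rho : S -> R) : R :=
  limn (series (fun t => gamma ^+ t * exp_reward P pi g rho t)).

Definition is_opt_constrained (P : S -> A -> S -> R) (gamma : R)
  (f h : S -> A -> R) (thr : R) (rho : S -> R) (pi : S -> A -> R) : Prop :=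
  is_policy pi /\ thr <= value P gamma pi h rho /\
  forall pi', is_policy pi' -> thr <= value P gamma pi' h rho ->
    value P gamma pi' f rho <= value P gamma pi f rho.

Definition dual_fun (P : S -> A -> S -> R) (gamma : R)
  (f h : S -> A -> R) (thr : R) (rho : S -> R) (lambda : R) : R :=
  sup [set x | exists pi, is_policy pi /\
        x = value P gamma pi f rho + lambda * (value P gamma pi h rho - thr)].

End CMDP.

(* Main.v *)
Require Import Defs.
From HB Require Import structures.
From mathcomp Require Import all_boot all_order all_algebra.
From mathcomp Require Import all_classical all_reals all_analysis.
From mathcomp Require Import lra.
Import Order.TTheory GRing.Theory Num.Theory.
Import numFieldNormedType.Exports.
Local Open Scope ring_scope.

Section H.
Variables (R : realType) (S A : finType).

Lemma sd_distr (P : S -> A -> S -> R) pi rho t :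
  is_kernel P -> is_policy pi -> is_distr rho -> is_distr (state_dist P pi rho t).
Proof.
move=> HP Hpi Hrho; elim: t => [|t [IH0 IH1]] //=; split.
- move=> s'; apply: sumr_ge0 => s _; apply: sumr_ge0 => a _.
  by rewrite !mulr_ge0 //; [case: (Hpi s) | case: (HP s a)].
- rewrite exchange_big /= -IH1; apply: eq_bigr => s _.
  rewrite exchange_big /=.
  have := (Hpi s) => -[_ H1].
  rewrite -[RHS]mulr1 -H1 mulr_sumr; apply: eq_bigr => a _.
  by rewrite -mulr_sumr; case: (HP s a) => _ ->; rewrite mulr1.
Qed.

Lemma er_bound (P : S -> A -> S -> R) pi (g : S -> A -> R) rho (M : R) t :
  is_kernel P -> is_policy pi -> is_distr rho ->
  (forall s a, 0 <= g s a <= M) ->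
  0 <= exp_reward P pi g rho t <= M.
Proof.
move=> HP Hpi Hrho Hg; have [D0 D1] := @sd_distr P pi rho t HP Hpi Hrho.
rewrite /exp_reward; apply/andP; split.
- apply: sumr_ge0 => s _; apply: sumr_ge0 => a _.
  have /andP[? _] := Hg s a.
  by rewrite !mulr_ge0 //; case: (Hpi s).
- rewrite -[M]mul1r -D1 mulr_suml; apply: ler_sum => s _.
  have [P0 P1] := Hpi s.
  rewrite -[_ * M]mulr1 -P1 mulr_sumr; apply: ler_sum => a _.
  have /andP[_ ?] := Hg s a.
  by rewrite -[_ * M * _]mulrA [M * _]mulrC mulrA ler_wpM2l // mulr_ge0.
Qed.

Definition vseq (P : S -> A -> S -> R) gamma pi g rho :=
  fun t => gamma ^+ t * exp_reward P pi g rho t.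

Lemma value_props (P : S -> A -> S -> R) gamma pi (g : S -> A -> R) rho (M : R) :
  is_kernel P -> is_policy pi -> is_distr rho -> 0 <= gamma < 1 ->
  (forall s a, 0 <= g s a <= M) ->
  cvgn (series (vseq P gamma pi g rho)) /\
  0 <= value P gamma pi g rho <= M / (1 - gamma).
Proof.
move=> HP Hpi Hrho /andP[g0 g1] Hg.
have HB t := @er_bound P pi g rho M t HP Hpi Hrho Hg.
have u0 t : 0 <= vseq P gamma pi g rho t.
  by have /andP[? _] := HB t; rewrite mulr_ge0 // exprn_ge0.
have uM t : vseq P gamma pi g rho t <= geometric M gamma t.
  by have /andP[_ ?] := HB t; rewrite /vseq /= mulrC ler_wpM2r // exprn_ge0.
have M0 : 0 <= M by have /andP[a b] := HB 0%N; exact: le_trans b.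
have ng : `|gamma| < 1 by rewrite ger0_norm.
have cg := @is_cvg_geometric_series _ M _ ng.
have cu : cvgn (series (vseq P gamma pi g rho)).
  apply: series_le_cvg u0 _ uM cg => t; rewrite /geometric /=; apply: mulr_ge0 => //; exact: exprn_ge0.
split => //; apply/andP; split.
- rewrite /value -/(vseq P gamma pi g rho); apply: (limr_ge cu); near=> n; exact: sumr_ge0.
- rewrite /value -/(vseq P gamma pi g rho).
  apply: le_trans (lim_series_le cu cg uM) _.
  by rewrite (cvg_lim _ (@cvg_geometric_series _ M _ ng)).
Unshelve. all: by end_near.
Qed.

Lemma valueD (P : S -> A -> S -> R) gamma pi f g rho :
  cvgn (series (vseq P gamma pi f rho)) -> cvgn (series (vseq P gamma pi g rho)) ->
  value P gamma pi (fun s a => f s a + g s a) rho =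
  value P gamma pi f rho + value P gamma pi g rho.
Proof.
move=> cf cg; rewrite /value.
have -> : (fun t => gamma ^+ t * exp_reward P pi (fun s a => f s a + g s a) rho t)
  = vseq P gamma pi f rho + vseq P gamma pi g rho.
  apply/funext => t; rewrite /vseq /exp_reward /= [in RHS]/GRing.add /= -mulrDr -big_split /=.
  congr (_ * _); apply: eq_bigr => s _; rewrite -big_split /=.
  by apply: eq_bigr => a _; rewrite mulrDr.
by rewrite seriesD limD.
Qed.
End H.
Arguments value_props {R S A P gamma pi g rho M}.
Arguments valueD {R S A P gamma pi f g rho}.
Theorem mainTheorem9 (R : realType) (S A : finType)
  (P Phat : S -> A -> S -> R) (r c xi : S -> A -> R) (b : R) (rho : S -> R)
  (gamma omega Delta eps_opt lambda_star : R)
  (pi_star pihat_star pibar : S -> A -> R) :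
  is_kernel P -> is_kernel Phat -> is_distr rho ->
  0 <= gamma < 1 ->
  (forall s a, 0 <= r s a <= 1) -> (forall s a, 0 <= c s a <= 1) ->
  (forall s a, 0 <= xi s a <= omega) ->
  0 < Delta -> eps_opt < Delta ->
  (* pi^* optimal for the true CMDP with threshold b *)
  is_opt_constrained P gamma r c b rho pi_star ->
  (* hat pi^* optimal for the empirical CMDP with reward r_p = r + xi, threshold b' = b + Delta *)
  is_opt_constrained Phat gamma (fun s a => r s a + xi s a) c (b + Delta) rho pihat_star ->
  (* lambda^* : optimal dual variable, with strong duality *)
  0 <= lambda_star ->
  (forall l, 0 <= l ->
     dual_fun Phat gamma (fun s a => r s a + xi s a) c (b + Delta) rho lambda_star
     <= dual_fun Phat gamma (fun s a => r s a + xi s a) c (b + Delta) rho l) ->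
  dual_fun Phat gamma (fun s a => r s a + xi s a) c (b + Delta) rho lambda_star
    = value Phat gamma pihat_star (fun s a => r s a + xi s a) rho ->
  (* pibar: eps_opt-approximate solution of the empirical problem *)
  is_policy pibar ->
  value Phat gamma pibar (fun s a => r s a + xi s a) rho
    >= value Phat gamma pihat_star (fun s a => r s a + xi s a) rho - eps_opt ->
  value Phat gamma pibar c rho >= b + Delta - eps_opt ->
  `|value P gamma pibar c rho - value Phat gamma pibar c rho| <= Delta - eps_opt ->
  `|value P gamma pi_star c rho - value Phat gamma pi_star c rho| <= Delta ->
  value P gamma pibar c rho >= b /\
  value P gamma pi_star r rho - value P gamma pibar r rho <=
    2 * omega / (1 - gamma) + eps_opt + 2 * Delta * lambda_star
    + `|value P gamma pi_star (fun s a => r s a + xi s a) rho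
        - value Phat gamma pi_star (fun s a => r s a + xi s a) rho|
    + `|value Phat gamma pibar (fun s a => r s a + xi s a) rho
        - value P gamma pibar (fun s a => r s a + xi s a) rho|.
Proof.
move=> HP HPh Hrho Hg Hr Hc Hxi HD Heps [Hps [Hpsc Hpsopt]] [Hph _] Hl _ Hdual
  Hpb Hpb1 Hpb2 Hab1 Hab2.
set rp := (fun s a => r s a + xi s a).
have Hrp s a : 0 <= rp s a <= 1 + omega.
  rewrite /rp; have /andP[? ?] := Hr s a; have /andP[? ?] := Hxi s a.
  by apply/andP; split; [apply: addr_ge0 | apply: lerD].
have [cr1 [vr1]] := value_props HP Hps Hrho Hg Hr.
have [cx1 /andP[vx1 _]] := value_props HP Hps Hrho Hg Hxi.
have [cr2 _] := value_props HP Hpb Hrho Hg Hr.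
have [cx2 /andP[vx2 vx2']] := value_props HP Hpb Hrho Hg Hxi.
have E1 := valueD cr1 cx1. have E2 := valueD cr2 cx2.
rewrite -/rp in E1 E2.
split.
  move: Hab1; rewrite ler_norml => /andP[h1 h2].
  move: Hpb2 h1; set u := value _ _ _ c _; set v := value _ _ _ c _ => H1 H2.
  lra.
set B := (1 + omega) / (1 - gamma) + lambda_star * (1 / (1 - gamma) - (b + Delta)).
have ub : has_ubound [set x | exists pi, is_policy pi /\
        x = value Phat gamma pi rp rho + lambda_star * (value Phat gamma pi c rho - (b + Delta))].
  exists B => x [pi [Hpi ->]].
  have [_ /andP[_ h1]] := value_props HPh Hpi Hrho Hg Hrp.
  have [_ /andP[_ h2]] := value_props HPh Hpi Hrho Hg Hc.
  rewrite /B lerD //; apply: ler_wpM2l => //; rewrite lerD2r //.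
have Hsup : value Phat gamma pi_star rp rho
    + lambda_star * (value Phat gamma pi_star c rho - (b + Delta))
    <= value Phat gamma pihat_star rp rho.
  rewrite -Hdual /dual_fun; apply: ub_le_sup => //; by exists pi_star.
move: Hab2; rewrite ler_norml => /andP[h1 h2].
have Hm : 0 <= lambda_star * (value Phat gamma pi_star c rho - (b + Delta) + 2 * Delta).
  apply: mulr_ge0 => //; lra.
have N1 := ler_norm (value P gamma pi_star rp rho - value Phat gamma pi_star rp rho).
have N2 := ler_norm (value Phat gamma pibar rp rho - value P gamma pibar rp rho).
have W0 : 0 <= omega / (1 - gamma) by apply: le_trans vx2'.
have -> : 2 * omega / (1 - gamma) = 2 * (omega / (1 - gamma)) by rewrite mulrA.
move: Hm Hsup Hpb1 N1 N2 W0 vx2' vx1 E1 E2.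
set W := omega / (1 - gamma).
move=> *; nra.
Qed.
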